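(* Consider $x(t+1)=Ax(t)+Bu(t)$, $y(t)=Cx(t)+e(t)+d(t)$ with $\|d(t)\|_\infty\le d_{\max}$ for all $t$, where there is a fixed set of at most $s$ sensors outside of which $e_i(t)=0$ for all $t$. Assume that $\mathcal{O}_\Gamma$ has full column rank for every $\Gamma\in\mathbb{C}_p^{p-s}$ (window length $l$ with $l+1\ge n$). Let $H\in\mathbb{R}^{r\times n}$, $q\in\mathbb{R}^r$, $\mathcal{C}=\{x:Hx+q\ge0\}$, $0<\gamma<1$, and let $u_{\mathrm{nom}}$ be any nominal input signal. For each $t\ge l$ let $u(t)=u_{\mathrm{safe}}(t)$ be the solution of the quadratic program $$u_{\mathrm{safe}}(t)=\arg\min_u\|u-u_{\mathrm{nom}}(t)\|^2\ \ \text{s.t.}\ \ HBu+H(A-(1-\gamma)I)x_d^{t,\Gamma}+\gamma q-\Delta_\Gamma\mathbf{1}\ge0\ \ \text{for all }\Gamma\in\mathbb{C}_p^{p-s}\text{ with }\underline d^\Gamma\le d_{\max},$$ and suppose this program is feasible for every $t\ge l$. If $x(l)\in\mathcal{C}$, then $x(t)\in\mathcal{C}$ for all $t\ge l$.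
   Context: $C_i$ is the $i$-th row of $C$; $\mathbb{C}_p^{p-s}$ is the collection of subsets of $\{1,\dots,p\}$ of size $p-s$. At time $t$, using the data $u(t-l),\dots,u(t-1)$, $y(t-l),\dots,y(t)$: $\mathcal{O}_i=(C_i;C_iA;\dots;C_iA^l)$, $\widetilde Y_i=(y_i(t-l),\dots,y_i(t))^\top$, $U=(u(t-l);\dots;u(t-1);0)$, $F_i$ the block lower-triangular matrix with $(j,k)$ block $C_iA^{j-k-1}B$ for $j>k$ and $0$ otherwise, $Y_i=\widetilde Y_i-F_iU$; $\mathcal{O}_\Gamma,Y_\Gamma$ are the vertical stacks over $i\in\Gamma$. $(x_d^{t-l,\Gamma},\underline d^\Gamma)$ is a minimizer of $\min_{x,\delta}\delta$ s.t. $-\delta\mathbf{1}\le\mathcal{O}_\Gamma x-Y_\Gamma\le\delta\mathbf{1}$; $d_e^\Gamma=d_{\max}+\underline d^\Gamma$; $x_d^{t,\Gamma}=A^lx_d^{t-l,\Gamma}+\sum_{k=1}^lA^{k-1}Bu(t-k)$; $m(\mathcal{O}_\Gamma)=\inf_{\|a\|_\infty=1}\|\mathcal{O}_\Gamma a\|_\infty$; $\Delta_\Gamma=\|H(A-(1-\gamma)I)\|_\infty\|A\|_\infty^l d_e^\Gamma/m(\mathcal{O}_\Gamma)$, with matrix $\infty$-norms the induced operator norms. Inequalities are componentwise. *)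

(* Defs.v *)
From HB Require Import structures.
From mathcomp Require Import all_boot all_order all_algebra.
From mathcomp Require Import boolp classical_sets reals.
Set Implicit Arguments. Unset Strict Implicit. Unset Printing Implicit Defensive.
Import Order.TTheory GRing.Theory Num.Theory.
Local Open Scope ring_scope.

Section Defs.
Variable R : realType.

Definition vnorm_inf k (v : 'cV[R]_k) : R := \big[Num.max/0]_(i < k) `|v i 0|.

Definition mxnorm_inf a b (M : 'M[R]_(a, b)) : R :=
  sup [set z | exists2 v : 'cV[R]_b, vnorm_inf v = 1 & z = vnorm_inf (M *m v)]%classic.

Definition mx_lowbound a b (M : 'M[R]_(a, b)) : R :=
  inf [set z | exists2 v : 'cV[R]_b, vnorm_inf v = 1 & z = vnorm_inf (M *m v)]%classic.

Variables (n m p l : nat).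

Definition Obs_i (A : 'M[R]_n) (C : 'M[R]_(p, n)) (i : 'I_p) :=
  \mxcol_(j < l.+1) (row i C *m A ^+ j).

(* O_Gamma: vertical stack of the O_i, i in Gamma (in increasing order) *)
Definition Obs_G (A : 'M[R]_n) (C : 'M[R]_(p, n)) (G : {set 'I_p}) :=
  \mxcol_(g < #|G|) Obs_i A C (enum_val g).

Definition Fmx_i (A : 'M[R]_n) (B : 'M[R]_(n, m)) (C : 'M[R]_(p, n)) (i : 'I_p) :=
  \mxblock_(j < l.+1, k < l.+1)
    ((if (k < j)%N then row i C *m A ^+ (j - k).-1 *m B else 0) : 'M[R]_(1, m)).

Definition Ustack (u : nat -> 'cV[R]_m) (t : nat) :=
  \mxcol_(k < l.+1) (if (k < l)%N then u (t - l + k)%N else 0).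

Definition Ytil_i (y : nat -> 'cV[R]_p) (t : nat) (i : 'I_p) :=
  \mxcol_(j < l.+1) ((y (t - l + j)%N i 0)%:M : 'M[R]_1).

Definition Y_i A B C (u : nat -> 'cV[R]_m) y t i :=
  Ytil_i y t i - Fmx_i A B C i *m Ustack u t.

Definition Y_G A B C (u : nat -> 'cV[R]_m) y t (G : {set 'I_p}) :=
  \mxcol_(g < #|G|) Y_i A B C u y t (enum_val g).

(* feasibility for the LP  min delta s.t. -delta 1 <= O_G x - Y_G <= delta 1 *)
Definition lp_feas A B C u y t G (x : 'cV[R]_n) (delta : R) :=
  forall k, `|(Obs_G A C G *m x - Y_G A B C u y t G) k 0| <= delta.

Definition lp_minimizer A B C u y t G x delta :=
  lp_feas A B C u y t G x delta /\
  forall x' delta', lp_feas A B C u y t G x' delta' -> delta <= delta'.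

(* x_d^{t,G} = A^l x_d^{t-l,G} + sum_{k=1}^l A^(k-1) B u(t-k) *)
Definition xd_now (A : 'M[R]_n) (B : 'M[R]_(n, m)) (u : nat -> 'cV[R]_m)
    (t : nat) (xdl : 'cV[R]_n) : 'cV[R]_n :=
  A ^+ l *m xdl + \sum_(1 <= k < l.+1) A ^+ k.-1 *m B *m u (t - k)%N.

Definition DeltaG r A C (H : 'M[R]_(r, n)) (gamma dmax dlow : R) G :=
  mxnorm_inf (H *m (A - (1 - gamma)%:M)) * mxnorm_inf A ^+ l * (dmax + dlow)
  / mx_lowbound (Obs_G A C G).

Definition qp_constr r A B C (H : 'M[R]_(r, n)) (q : 'cV[R]_r) gamma dmax
    (v : 'cV[R]_m) (xdt : 'cV[R]_n) (dlow : R) G :=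
  forall k, 0 <= (H *m B *m v + H *m (A - (1 - gamma)%:M) *m xdt + gamma *: q
                  - DeltaG A C H gamma dmax dlow G *: const_mx 1) k 0.

End Defs.

(* Main.v *)
Require Import Defs.
From HB Require Import structures.
From mathcomp Require Import all_boot all_order all_algebra.
From mathcomp Require Import boolp classical_sets reals.
From mathcomp Require Import zify ring lra.
Set Implicit Arguments. Unset Strict Implicit. Unset Printing Implicit Defensive.
Import Order.TTheory GRing.Theory Num.Theory.
Local Open Scope ring_scope.

Section Norms.
Variable R : realType.

Lemma vn_ge0 k (v : 'cV[R]_k) : 0 <= vnorm_inf v.
Proof. by apply: (big_ind (fun z => 0 <= z)) => // a b ha hb; rewrite le_max ha. Qed.

Lemma vn_entry k (v : 'cV[R]_k) i : `|v i 0| <= vnorm_inf v.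
Proof. exact: (le_bigmax _ (fun i => `|v i 0|)). Qed.

Lemma vn_le k (v : 'cV[R]_k) z : 0 <= z -> (forall i, `|v i 0| <= z) -> vnorm_inf v <= z.
Proof. by move=> z0 h; apply: bigmax_le. Qed.

Lemma vnZ k (c : R) (v : 'cV[R]_k) : vnorm_inf (c *: v) = `|c| * vnorm_inf v.
Proof.
apply/le_anti/andP; split.
  apply: vn_le; first by rewrite mulr_ge0 ?vn_ge0.
  by move=> i; rewrite mxE normrM ler_wpM2l ?vn_entry.
have [->|c0] := eqVneq c 0; first by rewrite normr0 mul0r vn_ge0.
have cp : 0 < `|c| by rewrite normr_gt0.
rewrite -(ler_pM2l (_ : 0 < `|c|^-1)) ?invr_gt0 // mulrA mulVf ?normr_eq0 // mul1r.
apply: vn_le => [|i]; first by rewrite mulr_ge0 ?vn_ge0 ?invr_ge0.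
have := vn_entry (c *: v) i; rewrite mxE normrM => h.
have -> : `|v i 0| = `|c|^-1 * (`|c| * `|v i 0|) by rewrite mulrA mulVf ?normr_eq0 ?mul1r.
by rewrite ler_wpM2l ?invr_ge0.
Qed.

Definition absum a b (M : 'M[R]_(a, b)) := \sum_i \sum_j `|M i j|.

Lemma absum_ge0 a b (M : 'M[R]_(a, b)) : 0 <= absum M.
Proof. by apply: sumr_ge0 => i _; apply: sumr_ge0. Qed.

Lemma vn_mul a b (M : 'M[R]_(a, b)) v : vnorm_inf (M *m v) <= absum M * vnorm_inf v.
Proof.
apply: vn_le; first by rewrite mulr_ge0 ?absum_ge0 ?vn_ge0.
move=> i; rewrite mxE.
apply: (le_trans (ler_norm_sum _ _ _)).
apply: (@le_trans _ _ (\sum_j `|M i j| * vnorm_inf v)).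
  by apply: ler_sum => j _; rewrite normrM ler_wpM2l ?vn_entry.
rewrite -mulr_suml ler_wpM2r ?vn_ge0 //.
rewrite /absum (bigD1 i) //= lerDl; apply: sumr_ge0 => k _; apply: sumr_ge0 => j _; exact: normr_ge0.
Qed.

Lemma vn_const1 b : (0 < b)%N -> vnorm_inf (const_mx 1 : 'cV[R]_b) = 1.
Proof.
move=> b0; apply/le_anti/andP; split.
  by apply: vn_le => // i; rewrite mxE normr1.
by have := vn_entry (const_mx 1 : 'cV[R]_b) (Ordinal b0); rewrite mxE normr1.
Qed.

Lemma vn0 b (v : 'cV[R]_b) : vnorm_inf v = 0 -> v = 0.
Proof.
move=> h; apply/matrixP => i j; rewrite (ord1 j) !mxE.
by apply/eqP; rewrite -normr_eq0 eq_le normr_ge0 -h vn_entry.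
Qed.

Lemma vn_zero b : vnorm_inf (0 : 'cV[R]_b) = 0.
Proof. by apply/le_anti; rewrite vn_ge0 andbT; apply: vn_le => // i; rewrite mxE normr0. Qed.

Definition opset a b (M : 'M[R]_(a, b)) :=
  [set z | exists2 v : 'cV[R]_b, vnorm_inf v = 1 & z = vnorm_inf (M *m v)]%classic.

Lemma opset_ne a b (M : 'M[R]_(a, b)) : (0 < b)%N -> (opset M !=set0)%classic.
Proof. by move=> b0; exists (vnorm_inf (M *m const_mx 1)); exists (const_mx 1); rewrite ?vn_const1. Qed.

Lemma mxnorm_ge0 a b (M : 'M[R]_(a, b)) : (0 < b)%N -> 0 <= mxnorm_inf M.
Proof.
move=> b0.
have hs : has_sup (opset M).
  split; first exact: opset_ne.
  exists (absum M) => z [v v1 ->]; by have := vn_mul M v; rewrite v1 mulr1.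
apply: le_trans (sup_upper_bound hs (ex_intro2 _ _ (const_mx 1) (vn_const1 b0) erefl)).
exact: vn_ge0.
Qed.

Lemma mxnorm_bound a b (M : 'M[R]_(a, b)) v : (0 < b)%N ->
  vnorm_inf (M *m v) <= mxnorm_inf M * vnorm_inf v.
Proof.
move=> b0.
have hs : has_sup (opset M).
  split; first exact: opset_ne.
  exists (absum M) => z [w w1 ->]; by have := vn_mul M w; rewrite w1 mulr1.
have [v0|vn0'] := eqVneq (vnorm_inf v) 0.
  by rewrite (vn0 v0) mulmx0 !vn_zero mulr0 lexx.
have vp : 0 < vnorm_inf v by rewrite lt_neqAle eq_sym vn0' vn_ge0.
have h1 : vnorm_inf ((vnorm_inf v)^-1 *: v) = 1.
  by rewrite vnZ ger0_norm ?invr_ge0 ?vn_ge0 // mulVf.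
have := sup_upper_bound hs (ex_intro2 _ _ _ h1 erefl).
rewrite -scalemxAr vnZ ger0_norm ?invr_ge0 ?vn_ge0 //.
by rewrite ler_pdivrMl // mulrC.
Qed.

Lemma lowb_bound a b (M : 'M[R]_(a, b)) v : (0 < b)%N ->
  mx_lowbound M * vnorm_inf v <= vnorm_inf (M *m v).
Proof.
move=> b0.
have hl : has_lbound (opset M) by exists 0 => z [w _ ->]; exact: vn_ge0.
have [v0|vn0'] := eqVneq (vnorm_inf v) 0.
  by rewrite v0 mulr0 vn_ge0.
have vp : 0 < vnorm_inf v by rewrite lt_neqAle eq_sym vn0' vn_ge0.
have h1 : vnorm_inf ((vnorm_inf v)^-1 *: v) = 1.
  by rewrite vnZ ger0_norm ?invr_ge0 ?vn_ge0 // mulVf.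
have := ge_inf hl (ex_intro2 _ _ _ h1 erefl).
rewrite -scalemxAr vnZ ger0_norm ?invr_ge0 ?vn_ge0 //.
by rewrite ler_pdivlMl // mulrC.
Qed.

Lemma lowb_pos a b (M : 'M[R]_(a, b)) (L : 'M[R]_(b, a)) : (0 < b)%N ->
  L *m M = 1%:M -> 0 < mx_lowbound M.
Proof.
move=> b0 LM.
have cp : 0 < absum L + 1 by rewrite ltr_wpDl ?absum_ge0.
apply: (@lt_le_trans _ _ (absum L + 1)^-1); first by rewrite invr_gt0.
apply: lb_le_inf; first exact: opset_ne.
move=> z [w w1 ->].
rewrite -[_^-1]mul1r ler_pdivrMr // mulrC.
have := vn_mul L (M *m w); rewrite mulmxA LM mul1mx w1 => h.
apply: (le_trans h); rewrite ler_wpM2r ?vn_ge0 // lerDl //.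
Qed.
End Norms.

Lemma mxcol_comb (R : realType) k (p_ : 'I_k -> nat) (P Y S : forall i, 'M[R]_(p_ i, 1)) :
  \mxcol_i P i - (\mxcol_i Y i - \mxcol_i S i) = \mxcol_i (P i - Y i + S i).
Proof. by apply/matrixP => a b; rewrite !mxE opprB addrA addrAC. Qed.

Lemma blk_test (R : realType) n m p l (A : 'M[R]_n) (B : 'M[R]_(n, m)) (C : 'M[R]_(p, n))
  (u : nat -> 'cV[R]_m) (y : nat -> 'cV[R]_p) t i (xa : 'cV[R]_n) :
  Obs_i l A C i *m xa - Y_i l A B C u y t i =
  \mxcol_(j < l.+1) (row i C *m A ^+ j *m xa - (y (t - l + j)%N i 0)%:M
     + \sum_(k < l.+1) ((if (k < j)%N then row i C *m A ^+ (j - k).-1 *m B else 0) : 'M[R]_(1, m))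
          *m (if (k < l)%N then u (t - l + k)%N else 0)).
Proof.
rewrite /Y_i /Obs_i /Fmx_i /Ustack /Ytil_i mxcol_mul mul_mxblock_mxrow.
exact: mxcol_comb.
Qed.
Lemma mxexpS (R : realType) n (A : 'M[R]_n) k : A *m A ^+ k = A ^+ k.+1.
Proof. by rewrite exprS. Qed.

Lemma xform (R : realType) n m (A : 'M[R]_n) (B : 'M[R]_(n, m)) (x : nat -> 'cV[R]_n) (u : nat -> 'cV[R]_m) :
  (forall t, x t.+1 = A *m x t + B *m u t) ->
  forall a j, x (a + j)%N = A ^+ j *m x a + \sum_(0 <= k < j) A ^+ (j - k).-1 *m B *m u (a + k)%N.
Proof.
move=> hx a; elim=> [|j IH].
  by rewrite addn0 expr0 mul1mx big_geq // addr0.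
rewrite addnS hx IH mulmxDr mulmxA mxexpS big_nat_recr //= subSnn /= expr0 mul1mx addrA.
congr (_ + _ + _).
rewrite mulmx_sumr; apply: eq_big_nat => k /andP[_ kj].
rewrite !mulmxA mxexpS; congr (_ *m _ *m _).
by rewrite subSn ?prednK // ?subn_gt0 // ltnW.
Qed.

Lemma xform2 (R : realType) n m (A : 'M[R]_n) (B : 'M[R]_(n, m)) (x : nat -> 'cV[R]_n) (u : nat -> 'cV[R]_m) l t :
  (forall t, x t.+1 = A *m x t + B *m u t) -> (l <= t)%N ->
  x t = A ^+ l *m x (t - l)%N + \sum_(1 <= k < l.+1) A ^+ k.-1 *m B *m u (t - k)%N.
Proof.
move=> hx lt.
have := xform hx (t - l) l; rewrite subnK // => ->; congr (_ + _).
rewrite big_add1 /= big_nat_rev /=; apply: eq_big_nat => k /andP[_ kl].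
rewrite add0n; congr (_ *m _ *m u _).
  by congr (_ ^+ _); lia.
lia.
Qed.

Lemma blk_val (R : realType) n m p l (A : 'M[R]_n) (B : 'M[R]_(n, m)) (C : 'M[R]_(p, n))
  (x : nat -> 'cV[R]_n) (u : nat -> 'cV[R]_m) (y e d : nat -> 'cV[R]_p) t i (j : 'I_l.+1) :
  (forall t, x t.+1 = A *m x t + B *m u t) ->
  (forall t, y t = C *m x t + e t + d t) ->
  row i C *m A ^+ j *m x (t - l)%N - (y (t - l + j)%N i 0)%:M
     + \sum_(k < l.+1) ((if (k < j)%N then row i C *m A ^+ (j - k).-1 *m B else 0) : 'M[R]_(1, m))
          *m (if (k < l)%N then u (t - l + k)%N else 0)
  = (- (e (t - l + j)%N i 0 + d (t - l + j)%N i 0))%:M.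
Proof.
move=> hx hy.
have jl : (j <= l)%N by rewrite -ltnS.
have hs : \sum_(k < l.+1) ((if (k < j)%N then row i C *m A ^+ (j - k).-1 *m B else 0) : 'M[R]_(1, m))
          *m (if (k < l)%N then u (t - l + k)%N else 0)
   = row i C *m \sum_(0 <= k < j) A ^+ (j - k).-1 *m B *m u (t - l + k)%N.
  rewrite (big_nat_widen _ _ _ _ _ (ltnW (ltn_ord j))) big_mkord mulmx_sumr [RHS]big_mkcond /=.
  apply: eq_bigr => k _.
  case: ifP => kj; last by rewrite mul0mx. 
  have kl : (k < l)%N by apply: leq_trans kj jl.
  by rewrite kl !mulmxA.
have hyv : (y (t - l + j)%N i 0)%:M = row i C *m x (t - l + j)%N
     + (e (t - l + j)%N i 0 + d (t - l + j)%N i 0)%:M.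
  rewrite hy. rewrite [X in X%:M]mxE. rewrite [X in (X + _)%:M]mxE -addrA raddfD /=; congr (_ + _).
  rewrite -row_mul [RHS]mx11_scalar; congr (_%:M); by rewrite [RHS]mxE.
rewrite hs hyv (xform hx) mulmxDr !mulmxA.
rewrite !opprD !addrA subrr sub0r addrAC addNr sub0r.
by rewrite -opprD; apply/matrixP => a b; rewrite !mxE mulNrn.
Qed.

Lemma mxcol_sub (R : realType) k (p_ : 'I_k -> nat) (P Y : forall i, 'M[R]_(p_ i, 1)) :
  \mxcol_i P i - \mxcol_i Y i = \mxcol_i (P i - Y i).
Proof. by apply/matrixP => a b; rewrite !mxE. Qed.

Lemma lp_true (R : realType) n m p l (A : 'M[R]_n) (B : 'M[R]_(n, m)) (C : 'M[R]_(p, n))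
  (x : nat -> 'cV[R]_n) (u : nat -> 'cV[R]_m) (y e d : nat -> 'cV[R]_p) t (G : {set 'I_p}) dmax :
  (forall t, x t.+1 = A *m x t + B *m u t) ->
  (forall t, y t = C *m x t + e t + d t) ->
  (forall t (i : 'I_p), `|d t i 0| <= dmax) ->
  (forall t i, i \in G -> e t i 0 = 0) ->
  lp_feas l A B C u y t G (x (t - l)%N) dmax.
Proof.
move=> hx hy hd he k.
rewrite /Obs_G /Y_G mxcol_mul mxcol_sub mxE blk_test mxE (blk_val _ _ _ hx hy) mxE.
set z := tagnat.sig2 (tagnat.sig2 k); rewrite (ord1 z) eqxx mulr1n.
by rewrite he ?enum_valP // add0r normrN hd.
Qed.

Lemma vn_pow (R : realType) n (A : 'M[R]_n) (w : 'cV[R]_n) k : (0 < n)%N ->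
  vnorm_inf (A ^+ k *m w) <= mxnorm_inf A ^+ k * vnorm_inf w.
Proof.
move=> n0; elim: k => [|k IH]; first by rewrite expr0 mul1mx mul1r.
rewrite -mxexpS -mulmxA exprS -mulrA.
apply: le_trans (mxnorm_bound _ _ n0) _.
by rewrite ler_wpM2l // mxnorm_ge0.
Qed.

Lemma entB (R : realType) a b (M N : 'M[R]_(a, b)) i j : (M - N) i j = M i j - N i j.
Proof. by rewrite !mxE. Qed.

Lemma Mexp (R : realType) r n (H : 'M[R]_(r, n)) (A : 'M[R]_n) c (v : 'cV[R]_n) :
  H *m (A - c%:M) *m v = H *m A *m v - c *: (H *m v).
Proof. by rewrite mulmxBr mulmxBl mul_mx_scalar -scalemxAl. Qed.

Lemma ident (R : realType) r (a P1 P2 Q1 Q2 q : 'cV[R]_r) (c g D : R) k :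
  c = 1 - g ->
  (P1 + a + q) k 0 = (a + (P2 - c *: Q2) + g *: q - D *: const_mx 1) k 0
     + (D + (P1 - P2 - c *: (Q1 - Q2)) k 0) + c * (Q1 + q) k 0.
Proof. move=> ->; rewrite !mxE; ring. Qed.

Theorem theorem1 (R : realType) (n m p r s l : nat)
  (A : 'M[R]_n) (B : 'M[R]_(n, m)) (C : 'M[R]_(p, n))
  (H : 'M[R]_(r, n)) (q : 'cV[R]_r) (gamma dmax : R)
  (x : nat -> 'cV[R]_n) (u unom : nat -> 'cV[R]_m)
  (y e d : nat -> 'cV[R]_p)
  (xdl : nat -> {set 'I_p} -> 'cV[R]_n) (dlow : nat -> {set 'I_p} -> R) :
  (* dynamics and measurements *)
  (forall t, x t.+1 = A *m x t + B *m u t) ->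
  (forall t, y t = C *m x t + e t + d t) ->
  (* bounded noise *)
  (forall t (i : 'I_p), `|d t i 0| <= dmax) ->
  (* at most s attacked sensors, fixed over time *)
  (exists S : {set 'I_p}, (#|S| <= s)%N /\ forall t i, i \notin S -> e t i 0 = 0) ->
  (* window length and observability *)
  (n <= l.+1)%N ->
  (forall G : {set 'I_p}, #|G| = (p - s)%N -> \rank (Obs_G l A C G) = n) ->
  0 < gamma < 1 ->
  (* LP minimizers at every time t >= l *)
  (forall t (G : {set 'I_p}), (l <= t)%N -> #|G| = (p - s)%N ->
     lp_minimizer l A B C u y t G (xdl t G) (dlow t G)) ->
  (* u(t) = u_safe(t) solves the QP at every t >= l *)
  (forall t, (l <= t)%N ->
     let feas := fun v : 'cV[R]_m =>
       forall G : {set 'I_p}, #|G| = (p - s)%N -> dlow t G <= dmax ->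
         qp_constr l A B C H q gamma dmax v (xd_now l A B u t (xdl t G))
           (dlow t G) G in
     feas (u t) /\
     forall v, feas v ->
       \sum_(k < m) (u t k 0 - unom t k 0) ^+ 2
         <= \sum_(k < m) (v k 0 - unom t k 0) ^+ 2) ->
  (* initial safety *)
  (forall k, 0 <= (H *m x l + q) k 0) ->
  forall t, (l <= t)%N -> forall k, 0 <= (H *m x t + q) k 0.
Proof.
move=> hx hy hd [S [hS he]] hnl hrank /andP[g0 g1] hlp hqp hinit.
have [n0|npos] := posnP n.
  move=> t _ k; move: hinit; subst n.
  by rewrite (flatmx0 (x t)) -(flatmx0 (x l)).
pose Gs := [set i in take (p - s) (enum (~: S))].
have hGsS : forall i, i \in Gs -> i \notin S.
  move=> i; rewrite inE => /mem_take; rewrite mem_enum inE //.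
have hcard : #|Gs| = (p - s)%N.
  rewrite cardsE; have /card_uniqP -> : uniq (take (p - s) (enum (~: S))).
    by rewrite take_uniq // enum_uniq.
  rewrite size_take -cardE cardsCs finset.setCK card_ord.
  case: ifP => // /negbT; rewrite -leqNgt => h.
  by apply/eqP; rewrite eqn_leq h /= leq_sub2l.
have he' : forall t i, i \in Gs -> e t i 0 = 0 by move=> t' i /hGsS; apply: he.
have step : forall t, (l <= t)%N -> (forall k, 0 <= (H *m x t + q) k 0) ->
    forall k, 0 <= (H *m x t.+1 + q) k 0.
  move=> t lt hsafe k.
  have lpT : lp_feas l A B C u y t Gs (x (t - l)%N) dmax.
    by apply: lp_true hx hy hd he'.
  have [lpF lpM] := hlp t Gs lt hcard.
  have dle := lpM _ _ lpT.
  set O := Obs_G l A C Gs.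
  set w := x (t - l)%N - xdl t Gs.
  have b1 : vnorm_inf (O *m w) <= dmax + dlow t Gs.
    have nrows := rank_leq_row O.
    rewrite /O hrank // in nrows.
    pose k0 := Ordinal (leq_trans npos nrows).
    have d0 : 0 <= dmax := le_trans (normr_ge0 _) (lpT k0).
    have dl0 : 0 <= dlow t Gs := le_trans (normr_ge0 _) (lpF k0).
    apply: vn_le => [|k']; first by rewrite addr_ge0.
    have -> : O *m w = (O *m x (t - l)%N - Y_G l A B C u y t Gs)
                       - (O *m xdl t Gs - Y_G l A B C u y t Gs).
      by rewrite /w mulmxBr opprB addrA subrK.
    rewrite entB; apply: le_trans (ler_normB _ _) _.
    by rewrite lerD ?lpT ?lpF.
  have [L hL] : exists L, L *m O = 1%:M.
    by apply/row_fullP; rewrite /row_full /O hrank.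
  have mpos := lowb_pos npos hL.
  have b2 : vnorm_inf w <= (dmax + dlow t Gs) / mx_lowbound O.
    rewrite ler_pdivlMr // mulrC; exact: le_trans (lowb_bound O w npos) b1.
  set xd := xd_now l A B u t (xdl t Gs).
  have xt : x t - xd = A ^+ l *m w.
    by rewrite /xd /xd_now {1}(xform2 hx lt) /w mulmxBr opprD addrACA subrr addr0.
  have b3 : forall k', `|(H *m (A - (1 - gamma)%:M) *m (x t - xd)) k' 0|
       <= DeltaG l A C H gamma dmax (dlow t Gs) Gs.
    move=> k'; apply: le_trans (vn_entry _ k') _; rewrite xt.
    have := mxnorm_bound (H *m (A - (1 - gamma)%:M)) (A ^+ l *m w) npos.
    move/le_trans; apply.
    rewrite /DeltaG -/O -!mulrA ler_wpM2l ?mxnorm_ge0 //.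
    have := vn_pow A w l npos; move/le_trans; apply.
    by rewrite ler_wpM2l ?exprn_ge0 ?mxnorm_ge0.
  have [feasU _] := hqp t lt.
  have hc := feasU Gs hcard dle k.
  rewrite Mexp in hc.
  have hb := b3 k.
  rewrite Mexp !mulmxBr in hb.
  rewrite hx mulmxDr !mulmxA (@ident _ _ (H *m B *m u t) _ (H *m A *m xd) (H *m x t) (H *m xd) q (1 - gamma) gamma (DeltaG l A C H gamma dmax (dlow t Gs) Gs) k erefl).
  have hs := hsafe k.
  have /ler_normlP [hb1 _] := hb.
  have hg : 0 <= 1 - gamma by rewrite subr_ge0 ltW.
  have := mulr_ge0 hg hs.
  lra.
move=> t; elim: t => [|t IH] lt k.
  by move: lt; rewrite leqn0 => /eqP l0; subst l; apply: hinit.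
have [lt'|gt'] := leqP l t.
  by apply: step => // k'; apply: IH.
have -> : t.+1 = l by apply/eqP; rewrite eqn_leq lt gt'.
exact: hinit.
Qed.
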